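(* Let $a,d$ be real numbers, let $A_{n,k}(a,d)$ be the general Eulerian numbers and $T_n(t,a,d)$ the general Eulerian polynomials defined below, and let $A_j(t)$ be the classical Eulerian polynomials defined below. Then for every integer $n\ge 0$, $$T_n(t,a,d)=\sum_{k=-1}^{n-1}A_{n,k}(a,d)t^{k+1}=\sum_{j=0}^n\binom{n}{j}d^jA_j(t)(at-a)^{n-j}.$$
   Context: For real numbers $a,d$, the general Eulerian numbers $A_{n,k}(a,d)$ (integers $n\ge 0$, $k$) are defined by $A_{0,-1}(a,d)=1$, $A_{n,k}(a,d)=0$ whenever $k\ge n$ or $k\le -2$, and for $n\ge 1$, $-1\le k\le n-1$: $$A_{n,k}(a,d)=(-a+(k+2)d)A_{n-1,k}(a,d)+(a+(n-k-1)d)A_{n-1,k-1}(a,d).$$ The general Eulerian polynomials are $T_n(t,a,d)=\sum_{k=-1}^{n-1}A_{n,k}(a,d)t^{k+1}$ (so $T_0(t,a,d)=1$). The classical Eulerian polynomials are defined by $A_0(t)=1$ and $A_n(t)=\sum_{k=0}^{n-1}\binom{n}{k}A_k(t)(t-1)^{n-1-k}$ for $n\ge 1$. Also $x^0=1$ for all $x$. *)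

(* Defs.v *)
From mathcomp Require Import all_boot all_order all_algebra.
From mathcomp Require Import reals.
Set Implicit Arguments. Unset Strict Implicit. Unset Printing Implicit Defensive.
Import Order.TTheory GRing.Theory Num.Theory.
Local Open Scope ring_scope.

Fixpoint genEuler (R : ringType) (a d : R) (n : nat) (k : int) : R :=
  match n with
  | 0%N => if k == (-1)%R then 1 else 0
  | n'.+1 =>
      if ((-1)%R <= k) && (k <= (n' : int)) then
        (- a + (k + 2)%:~R * d) * genEuler a d n' k
        + (a + ((n : int) - k - 1)%:~R * d) * genEuler a d n' (k - 1)
      else 0
  end.

(* General Eulerian polynomial T_n(t,a,d) = sum_{k=-1}^{n-1} A_{n,k} t^{k+1};
   the index m = k+1 ranges over 0..n. *)
Definition genEulerPoly (R : ringType) (a d : R) (n : nat) : {poly R} :=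
  \sum_(m < n.+1) (genEuler a d n (m%:Z - 1)) *: 'X^m.

Fixpoint eulerPolys (R : ringType) (n : nat) : seq {poly R} :=
  match n with
  | 0%N => [:: 1]
  | n'.+1 =>
      let s := eulerPolys R n' in
      rcons s (\sum_(k < n'.+1) ('C(n'.+1, k))%:R * nth 0 s k * ('X - 1) ^+ (n' - k))
  end.

Definition eulerPoly (R : ringType) (n : nat) : {poly R} := nth 0 (eulerPolys R n) n.

(* Main.v *)
Require Import Defs.
From mathcomp Require Import all_boot all_order all_algebra.
From mathcomp Require Import reals.
From mathcomp Require Import ring zify.
Import Order.TTheory GRing.Theory Num.Theory.
Local Open Scope ring_scope.

Lemma pascal_sum (V : zmodType) (n : nat) (f : nat -> V) :
  \sum_(j < n.+2) f j *+ 'C(n.+1, j) =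
  \sum_(j < n.+1) f j *+ 'C(n, j) + \sum_(j < n.+1) f j.+1 *+ 'C(n, j).
Proof.
rewrite big_ord_recl /= bin0.
under eq_bigr => j _ do rewrite /bump /= binS mulrnDr.
rewrite big_split /= addrA; congr (_ + _).
rewrite [in RHS]big_ord_recl bin0 /=; congr (_ + _).
rewrite big_ord_recr /= bin_small // mulr0n addr0.
by apply: eq_bigr => j _.
Qed.

Section K.
Variable R : comNzRingType.
Variable P : nat -> {poly R}.
Hypothesis hP : forall j, P j.+1 = (1 + j%:R *: 'X) * P j + 'X * (1 - 'X) * (P j)^`().
Variables a d : R.
Let x : {poly R} := a *: 'X - a%:P.
Definition Sx n := \sum_(j < n.+1) ('C(n, j))%:R *: (d ^+ j *: (P j * x ^+ (n - j))).

Lemma Sx_deriv n : (Sx n)^`() = \sum_(j < n.+1) ('C(n, j))%:R *: (d ^+ j *: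
   ((P j)^`() * x ^+ (n - j) + P j * (a%:P * x ^+ (n - j).-1 *+ (n - j)))).
Proof.
rewrite /Sx raddf_sum; apply: eq_bigr => j _.
rewrite !linearZ /= !derivZ derivM deriv_exp /x derivB derivZ derivX derivC subr0 alg_polyC.
by [].
Qed.
Lemma Sx_rec n : Sx n.+1 = (x + d%:P + (n%:R * d) *: 'X) * Sx n + d *: ('X * (1 - 'X) * (Sx n)^`()).
Proof.
rewrite Sx_deriv /Sx.
under eq_bigr => j _ do rewrite scaler_nat.
rewrite (pascal_sum _ _ (fun j => d ^+ j *: (P j * x ^+ (n.+1 - j)))).
rewrite !mulr_sumr scaler_sumr -big_split -big_split /=.
apply: eq_bigr => -[i hi] _ /=.
have [m hm] : exists m, n = (i + m)%N by exists (n - i)%N; lia.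
rewrite hm.
have e1 : ((i + m).+1 - i = m.+1)%N by lia.
have e2 : ((i + m) - i = m)%N by lia.
have e3 : ((i + m).+1 - i.+1 = m)%N by lia.
rewrite e1 e2 e3 hP !scaler_nat natrD.
case: m {hm e1 e2 e3} => [|m] /=.
  rewrite /x !expr0 !mulr0n !exprS -!mul_polyC; ring.
rewrite /x !exprS -!mul_polyC; ring.
Qed.
End K.

Lemma Sx0 (R : comNzRingType) (P : nat -> {poly R}) a d : Sx _ P a d 0 = P 0%N.
Proof. by rewrite /Sx big_ord1 bin0 scale1r expr0 scale1r mulr1. Qed.

Fixpoint Bp (R : comNzRingType) (n : nat) : {poly R} :=
  if n is n'.+1 then (1 + n'%:R *: 'X) * Bp R n' + 'X * (1 - 'X) * (Bp R n')^`() else 1.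

Lemma BpP (R : comNzRingType) j : Bp R j.+1 = (1 + j%:R *: 'X) * Bp R j + 'X * (1 - 'X) * (Bp R j)^`().
Proof. by []. Qed.
Arguments Bp : simpl never.

Lemma U (R : comNzRingType) n : Sx _ (Bp R) 1 1 n.+1 = 'X * Bp R n.+1.
Proof.
elim: n => [|n IH].
  rewrite (Sx_rec _ _ (BpP R)) Sx0 (BpP R 0) [Bp R 0]/= derivC -!mul_polyC; ring.
rewrite (Sx_rec _ _ (BpP R)) IH derivM derivX (BpP R n.+1) -!mul_polyC; ring.
Qed.

Lemma eulerPolys_nth (R : ringType) n k : (k <= n)%N -> nth 0 (eulerPolys R n) k = eulerPoly R k.
Proof.
have sz : forall m, size (eulerPolys R m) = m.+1.
  by elim => [|m IH] //=; rewrite size_rcons IH.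
elim: n => [|n IH]; first by rewrite leqn0 => /eqP ->.
rewrite leq_eqVlt => /orP[/eqP -> //|hk].
by rewrite /= nth_rcons sz hk IH.
Qed.

Lemma euler_Bp (R : idomainType) n : eulerPoly R n = Bp R n.
Proof.
elim/ltn_ind: n => -[|n] IH; first by [].
have hx : ('X - 1 : {poly R}) != 0 by rewrite -polyC1 polyXsubC_eq0.
apply: (mulfI hx).
have := U R n; rewrite /Sx big_ord_recr /= subnn expr0 binn expr1n !scale1r mulr1.
move/(canRL (addrK _)) => H.
rewrite [RHS]mulrBl [in RHS]mul1r -H /eulerPoly [eulerPolys R n.+1]/= nth_rcons.
have sz : forall m, size (eulerPolys R m) = m.+1.
  by elim => [|m IHm] //=; rewrite size_rcons IHm.
rewrite sz ltnn eqxx mulr_sumr; apply: eq_bigr => -[k hk] _ /=.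
rewrite eulerPolys_nth // IH // subSn // exprS expr1n !scale1r scaler_nat polyC1.
ring.
Qed.

Section G.
Variable R : comNzRingType.
Variables a d : R.

Lemma gE_hi n (k : int) : (n%:Z <= k) -> genEuler a d n k = 0.
Proof.
case: n => [|n] /= hk.
  by case: eqP => // hk1; lia.
by case: ifP => //; lia.
Qed.

Lemma gE_lo n (k : int) : (k <= -2) -> genEuler a d n k = 0.
Proof.
case: n => [|n] /= hk.
  by case: eqP => // hk1; lia.
by case: ifP => //; lia.
Qed.

Lemma coefT n m : (genEulerPoly a d n)`_m = genEuler a d n (m%:Z - 1).
Proof.
rewrite /genEulerPoly -(poly_def n.+1 (fun m : nat => genEuler a d n (m%:Z - 1))) coef_poly; case: ltnP => // hm.
by rewrite gE_hi //; lia.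
Qed.

Lemma T_rec n : genEulerPoly a d n.+1 =
  (a *: 'X - a%:P + d%:P + (n%:R * d) *: 'X) * genEulerPoly a d n
  + d *: ('X * (1 - 'X) * (genEulerPoly a d n)^`()).
Proof.
set T := genEulerPoly a d n.
have -> : (a *: 'X - a%:P + d%:P + (n%:R * d) *: 'X) * T + d *: ('X * (1 - 'X) * T^`())
   = (d - a) *: T + 'X * ((a + n%:R * d) *: T) + d *: ('X * T^`()) - d *: ('X * ('X * T^`())).
  rewrite -!mul_polyC; rewrite !rmorphB !rmorphD !rmorphM /=; ring.
apply/polyP => m.
rewrite coefT !(coefD, coefB, coefZ, coefXM, coef_deriv) /T !coefT.
case: m => [|j] /=.
  rewrite coefN coefZ coefXM /= [genEuler _ _ n (_ - 1 - 1)]gE_lo //; ring.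
have e : (j.+1%:Z - 1 = j%:Z) by lia.
rewrite e coefN coefZ coefXM /= coefXM.
case: ifP => hj.
  case: j e hj => [|j] e hj /=.
    ring.
  rewrite coef_deriv coefT.
  have e2 : (j.+1%:Z - 1 = j%:Z) by lia.
  rewrite e2. ring.
have hj' : (n < j)%N by move: hj; lia.
case: j e hj hj' => [|j] e hj hj' //=.
rewrite coef_deriv coefT.
have e2 : (j.+1%:Z - 1 = j%:Z) by lia.
rewrite e2 !gE_hi; try lia.
ring.
Qed.
End G.

Theorem lemma3p2 (R : realType) (a d : R) (n : nat) :
  genEulerPoly a d n =
  \sum_(j < n.+1) ('C(n, j))%:R *: (d ^+ j *: (eulerPoly R j * (a *: 'X - a%:P) ^+ (n - j))).
Proof.
have hP : forall j, eulerPoly R j.+1 = (1 + j%:R *: 'X) * eulerPoly R j + 'X * (1 - 'X) * (eulerPoly R j)^`().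
  by move=> j; rewrite !euler_Bp BpP.
change (genEulerPoly a d n = Sx R (eulerPoly R) a d n).
elim: n => [|n IH].
  rewrite Sx0 /genEulerPoly big_ord1 /= expr0 scale1r.
  by [].
by rewrite T_rec (Sx_rec _ _ hP) IH.
Qed.
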